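(* Let $\Theta_{\mathrm{Sym}(V)}:\mathrm{Sym}(V)\to\mathrm{Sym}(V)$ be the linear map with $\Theta_{\mathrm{Sym}(V)}(\overline{v_\alpha})=2^{\ell(\alpha)}\overline{v_\alpha}$ if $v_\alpha$ is odd and $0$ otherwise. Then $\Theta_{\mathrm{Sym}(V)}$ is a graded Hopf algebra morphism with image in $\mathrm{Sym}(\mathrm{O}(V))$, and $\Phi_{\mathrm{Sym}(V)}\circ\Theta_{\mathrm{Sym}(V)}=\Theta_{\mathrm{Sym}}\circ\Phi_{\mathrm{Sym}(V)}$. Thus $\Theta_{\mathrm{Sym}(V)}$ is a theta map for $(\mathrm{Sym}(V),\zeta_{\mathrm{Sym}(V)})$.
   Context: $V$ is a graded vector space with fixed homogeneous basis $\{v_1,v_2,\dots\}$, positive degrees, finitely many of each degree. For a composition $\alpha=(\alpha_1,\dots,\alpha_\ell)$ ($\ell(\alpha)=\ell$), $v_\alpha=v_{\alpha_1}\cdots v_{\alpha_\ell}$ in the tensor algebra $\mathrm{T}(V)$ (concatenation product, $v_i$ primitive). $\mathrm{Sym}(V)=\mathrm{T}(V)/I(V)$ where $I(V)$ is the ideal generated by all $v_iv_j-v_jv_i$; $\overline{v_\alpha}$ is the class of $v_\alpha$, $\deg(\overline{v_\alpha})=\sum\deg(v_{\alpha_i})$. $v_\alpha$ is odd if every $\deg(v_{\alpha_i})$ is odd; $\mathrm{Sym}(\mathrm{O}(V))$ is the span of $\overline{v_\alpha}$ with $v_\alpha$ odd. $\mathrm{Sym}$ is the Hopf algebra of symmetric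 functions with scaled power sums $p_n=\frac1n\sum_i x_i^n$ (primitive, freely generating). $\Phi_{\mathrm{Sym}(V)}:\mathrm{Sym}(V)\to\mathrm{Sym}$ is the algebra morphism $\overline{v_i}\mapsto p_{\deg(v_i)}$; $\zeta_{\mathrm{Sym}(V)}$ is the character $\overline{v_i}\mapsto 1/\deg(v_i)$. $\zeta_{\mathrm{Sym}}(f)=f(1,0,0,\dots)$. $\Theta_{\mathrm{Sym}}$ is the unique graded Hopf morphism $\mathrm{Sym}\to\mathrm{Sym}$ with $\zeta_{\mathrm{Sym}}\circ\Theta_{\mathrm{Sym}}=\overline{\zeta_{\mathrm{Sym}}^{-1}}\zeta_{\mathrm{Sym}}$ (convolution $\zeta\zeta'=m\circ(\zeta\otimes\zeta')\circ\Delta$, $\zeta^{-1}=\zeta\circ\mathcal{S}$, $\bar\zeta=(-1)^n\zeta$ in degree $n$); equivalently the algebra morphism with $\Theta_{\mathrm{Sym}}(p_n)=2p_n$ for $n$ odd and $0$ for $n$ even. A theta map here means a graded Hopf morphism $\Theta$ of $\mathrm{Sym}(V)$ with $\Phi_{\mathrm{Sym}(V)}\circ\Theta=\Theta_{\mathrm{Sym}}\circ\Phi_{\mathrm{Sym}(V)}$. *)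

(* Defs.v *)
From HB Require Import structures.
From mathcomp Require Import all_boot all_order all_algebra.
From mathcomp Require Import finmap.
From mathcomp.multinomials Require Import monalg.

Set Implicit Arguments.
Unset Strict Implicit.
Unset Printing Implicit Defensive.

Import GRing.Theory.
Local Open Scope fset_scope.
Local Open Scope ring_scope.

(* Product of two monomial monoids (basis of a tensor product of two   *)
(* monoid algebras: F[M1] (x) F[M2] = F[M1 x M2]).                      *)
Section MPair.
Variables (M1 M2 : conomType).
Definition mpair := (M1 * M2)%type.
HB.instance Definition _ := Choice.on mpair.

Definition mpair_one : mpair := (mone, mone).
Definition mpair_mul (x y : mpair) : mpair := (mmul x.1 y.1, mmul x.2 y.2).

Lemma mpair_mulA : associative mpair_mul.
Proof. by move=> [a b] [c d] [e f]; rewrite /mpair_mul /= !mulmA. Qed.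
Lemma mpair_mul1m : left_id mpair_one mpair_mul.
Proof. by move=> [a b]; rewrite /mpair_mul /= !mul1m. Qed.
Lemma mpair_mulm1 : right_id mpair_one mpair_mul.
Proof. by move=> [a b]; rewrite /mpair_mul /= !mulm1. Qed.
Lemma mpair_unitm x y : mpair_mul x y = mpair_one -> x = mpair_one /\ y = mpair_one.
Proof.
case: x y => [a b] [c d] [] /unitm [-> ->] /unitm [-> ->]; by [].
Qed.
Lemma mpair_mulC : commutative mpair_mul.
Proof. by move=> [a b] [c d]; rewrite /mpair_mul /= (mulmC a) (mulmC b). Qed.

HB.instance Definition _ := Choice_isMonomialDef.Build mpair
  mpair_mulA mpair_mul1m mpair_mulm1 mpair_unitm.
HB.instance Definition _ := MonomialDef_isConomialDef.Build mpair mpair_mulC.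
End MPair.

Section SymV.
Variable F : fieldType.

Definition polyalg (J : choiceType) := {malg F[{cmonom J}]}.

Definition gen (J : choiceType) (j : J) : polyalg J := << ucm j >>.

Definition extm (J : choiceType) (A : lalgType F) (x : J -> A)
    (g : polyalg J) : A :=
  \sum_(m <- msupp g) g@_m *: \prod_(j <- finsupp m) x j ^+ m j.

Variables (I : choiceType) (deg : I -> nat).

(* Sym(V): polynomial algebra on the basis v_i of V, v_i = gen i. *)
Definition SymV := polyalg I.

Definition SymV2 := {malg F[mpair {cmonom I} {cmonom I}]}.

Definition tens_l (a : SymV) : SymV2 :=
  \sum_(m <- msupp a) a@_m *: << (m, @onecm I) : mpair _ _ >>.
Definition tens_r (a : SymV) : SymV2 :=
  \sum_(m <- msupp a) a@_m *: << (@onecm I, m) : mpair _ _ >>.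
Definition tens (a b : SymV) : SymV2 := tens_l a * tens_r b.

Definition tmap (f g : SymV -> SymV) (t : SymV2) : SymV2 :=
  \sum_(k <- msupp t) t@_k *: tens (f << k.1 >>) (g << k.2 >>).

Definition coprod : SymV -> SymV2 :=
  extm (fun i => tens (gen i) 1 + tens 1 (gen i)).
Definition counit (a : SymV) : F := a@_(@onecm I).
Definition antipode : SymV -> SymV := extm (fun i => - gen i).

Definition hopf_morph (T : SymV -> SymV) : Prop :=
  [/\ (forall (c : F) (a b : SymV), T (c *: a + b) = c *: T a + T b),
      T 1 = 1 &
      (forall a b : SymV, T (a * b) = T a * T b)] /\
  [/\ (forall a : SymV, coprod (T a) = tmap T T (coprod a)),
      (forall a : SymV, counit (T a) = counit a) &
      (forall a : SymV, antipode (T a) = T (antipode a))].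

Definition wdeg (m : {cmonom I}) : nat :=
  (\sum_(i <- finsupp m) m i * deg i)%N.
Definition homog (n : nat) (a : SymV) : Prop :=
  forall m, m \in msupp a -> wdeg m = n.
Definition graded (T : SymV -> SymV) : Prop :=
  forall n a, homog n a -> homog n (T a).

(* v_alpha odd: every letter has odd degree; l(alpha) = mdeg m *)
Definition odd_monom (m : {cmonom I}) : bool :=
  all (fun i => odd (deg i)) (finsupp m).
Definition in_SymO (a : SymV) : Prop :=
  forall m, m \in msupp a -> odd_monom m.

Definition ThetaSymV (a : SymV) : SymV :=
  \sum_(m <- msupp a)
    a@_m *: (if odd_monom m then (2%:R ^+ mdeg m) *: << m >> else 0).

(* Sym = F[p_1, p_2, ...]; the variable k : nat stands for p_(k+1). *)
Definition Sym := polyalg nat.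
Definition pn (n : nat) : Sym := gen n.-1.

Definition PhiSymV : SymV -> Sym := extm (fun i => pn (deg i)).

Definition ThetaSym : Sym -> Sym :=
  extm (fun k : nat => if odd k.+1 then 2%:R *: pn k.+1 else 0).

Definition is_theta_map (T : SymV -> SymV) : Prop :=
  [/\ hopf_morph T, graded T &
      forall a, PhiSymV (T a) = ThetaSym (PhiSymV a)].
End SymV.

(* Main.v *)
Require Import Defs.
From HB Require Import structures.
From mathcomp Require Import all_boot all_order all_algebra.
From mathcomp Require Import finmap.
From mathcomp.multinomials Require Import monalg.
Import GRing.Theory.
Local Open Scope ring_scope.

Section Gen.
Context {F : fieldType}.

Section LmDef.
Context {K : choiceType} {A : lmodType F} (phi : K -> A).
Definition Lm (g : {malg F[K]}) : A := \sum_(k <- msupp g) g@_k *: phi k.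

Lemma LmEw {d : {fset K}} {g} : (msupp g `<=` d)%fset -> Lm g = \sum_(k <- d) g@_k *: phi k.
Proof.
move=> le; rewrite /Lm (big_fset_incl _ le) //= => x _ /mcoeff_outdom ->.
by rewrite scale0r.
Qed.

Lemma Lm_lin c a b : Lm (c *: a + b) = c *: Lm a + Lm b.
Proof.
set d := (msupp a `|` msupp b `|` msupp (c *: a + b))%fset.
have s1 : (msupp a `<=` d)%fset.
  by apply/fsubsetP => x; rewrite !in_fsetU => ->.
have s2 : (msupp b `<=` d)%fset.
  by apply/fsubsetP => x; rewrite !in_fsetU => ->; rewrite orbT.
have s3 : (msupp (c *: a + b) `<=` d)%fset.
  by apply/fsubsetP => x; rewrite !in_fsetU => ->; rewrite orbT.
rewrite (LmEw s1) (LmEw s2) (LmEw s3) scaler_sumr -big_split /=.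
by apply: eq_bigr => k _; rewrite mcoeffD mcoeffZ scalerDl scalerA.
Qed.

Lemma Lm0 : Lm 0 = 0.
Proof. by rewrite /Lm msupp0 big_seq_fset0. Qed.

Lemma LmD a b : Lm (a + b) = Lm a + Lm b.
Proof. by have := Lm_lin 1 a b; rewrite !scale1r. Qed.

Lemma LmUc c k : Lm << c *g k >> = c *: phi k.
Proof. by rewrite (LmEw msuppU_le) big_seq_fset1 mcoeffUU. Qed.

Lemma LmU k : Lm << k >> = phi k.
Proof. by rewrite LmUc scale1r. Qed.
End LmDef.

Lemma monalgUZ (K : choiceType) (c : F) (k : K) :
  << c *g k >> = c *: << k >> :> {malg F[K]}.
Proof. by apply/malgP => k'; rewrite mcoeffZ !mcoeffU mulr_natr. Qed.

Definition linf (K : choiceType) (A : lmodType F) (f : {malg F[K]} -> A) :=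
  forall c a b, f (c *: a + b) = c *: f a + f b.

Arguments linf {K A}.
Lemma linf0 {K A f} : @linf K A f -> f 0 = 0.
Proof.
move=> fl; have := fl 1 0 0; rewrite !scale1r !addr0 => h.
by apply/(addrI (f 0)); rewrite addr0 -h.
Qed.

Lemma linfD {K A f} : @linf K A f -> forall a b, f (a + b) = f a + f b.
Proof. by move=> fl a b; have := fl 1 a b; rewrite !scale1r. Qed.

Lemma linfZ {K A f} : @linf K A f -> forall c a, f (c *: a) = c *: f a.
Proof. by move=> fl c a; have := fl c a 0; rewrite addr0 (linf0 fl) addr0. Qed.

Lemma linfN {K A f} : @linf K A f -> forall a, f (- a) = - f a.
Proof. by move=> fl a; have := linfZ fl (-1) a; rewrite !scaleN1r. Qed.

Lemma linf_sum {K A f} : @linf K A f -> forall (T : Type) (r : seq T) (P : pred T) G,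
  f (\sum_(i <- r | P i) G i) = \sum_(i <- r | P i) f (G i).
Proof. by move=> fl T r P G; rewrite (big_morph f (linfD fl) (linf0 fl)). Qed.

Lemma Lm_linf {K : choiceType} {A : lmodType F} (phi : K -> A) : linf (Lm phi).
Proof. exact: Lm_lin. Qed.

Lemma lin_expand (K : choiceType) (A : lmodType F) (f : {malg F[K]} -> A) :
  linf f -> forall a, f a = Lm (fun k => f << k >>) a.
Proof.
move=> fl a; rewrite {1}(monalgE a) (linf_sum fl) /Lm.
apply: eq_bigr => k _; rewrite monalgUZ.
exact: (linfZ fl).
Qed.

Definition lm (B : algType F) (A : algType F) (f : B -> A) :=
  [/\ (forall c a b, f (c *: a + b) = c *: f a + f b), f 1 = 1 &
      (forall a b, f (a * b) = f a * f b)].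
Arguments lm {B A}.

Lemma lm_comp (B C A : algType F) (f : B -> C) (g : C -> A) :
  lm f -> lm g -> lm (g \o f).
Proof.
move=> [fl f1 fM] [gl g1 gM]; split=> /= [c a b||a b]; by rewrite ?fl ?gl ?f1 ?g1 ?fM ?gM.
Qed.

Lemma UM (K : monomType) (k1 k2 : K) :
  << k1 >> * << k2 >> = << mmul k1 k2 >> :> {malg F[K]}.
Proof. by rewrite malgM_def fgmulUU mulr1. Qed.

Lemma one_U (K : monomType) : (1 : {malg F[K]}) = << (mone : K) >>.
Proof. by []. Qed.

Section LmMult.
Variables (K : conomType) (A : algType F) (phi : K -> A).
Hypotheses (phi1 : phi mone = 1) (phiM : forall k1 k2, phi (mmul k1 k2) = phi k1 * phi k2).

Lemma Lm_lm : lm (Lm phi).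
Proof.
split; first exact: Lm_lin.
  by rewrite one_U LmU.
move=> a b; rewrite [Lm phi a]/Lm [Lm phi b]/Lm malgME (linf_sum (Lm_linf phi)).
rewrite mulr_suml; apply: eq_bigr => k1 _.
rewrite (linf_sum (Lm_linf phi)) mulr_sumr; apply: eq_bigr => k2 _.
by rewrite LmUc phiM -scalerAl -scalerAr scalerA.
Qed.
End LmMult.

Lemma lm_ext_eq (B A : algType F) (f g : B -> A) : f =1 g -> lm g -> lm f.
Proof.
move=> e [gl g1 gM]; split=> [c a b||a b]; by rewrite ?e ?gl ?g1 ?gM.
Qed.

Lemma lmX {B A : algType F} {f : B -> A} : lm f -> forall x n, f (x ^+ n) = f x ^+ n.
Proof.
by move=> [_ f1 fM] x; elim=> [|n IH]; rewrite ?expr0 ?f1 // !exprS fM IH.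
Qed.

Lemma lm_prod {B A : algType F} {f : B -> A} : lm f -> forall (T : Type) (r : seq T) G,
  f (\prod_(i <- r) G i) = \prod_(i <- r) f (G i).
Proof. by move=> [_ f1 fM] T r G; rewrite (big_morph f fM f1). Qed.

Section Extm.
Variables (J : choiceType) (A : comAlgType F) (x : J -> A).
Definition psi (m : {cmonom J}) : A := \prod_(j <- finsupp m) x j ^+ m j.

Lemma psiEw {m : {cmonom J}} {d : {fset J}} : (finsupp m `<=` d)%fset ->
  psi m = \prod_(j <- d) x j ^+ m j.
Proof.
move=> le; rewrite /psi (big_fset_incl _ le) //= => j _.
by rewrite -cmE_eq0 => /eqP ->; rewrite expr0.
Qed.

Lemma psi1 : psi mone = 1.
Proof. by rewrite /psi mdom1 big_seq_fset0. Qed.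

Lemma psiM (m1 m2 : {cmonom J}) : psi (mmul m1 m2) = psi m1 * psi m2.
Proof.
have h : (finsupp (mmul m1 m2) `<=` (finsupp m1 `|` finsupp m2))%fset.
  rewrite mdomD; exact: fsubset_refl.
rewrite (psiEw h) [psi m1](psiEw (fsubsetUl (finsupp m1) (finsupp m2))).
rewrite [psi m2](psiEw (fsubsetUr (finsupp m1) (finsupp m2))) -big_split /=.
under eq_bigr => j _ do rewrite cmM exprD.
reflexivity.
Qed.


Lemma extm_Lm : extm x =1 Lm psi.
Proof. move=> g; reflexivity. Qed.

Lemma extm_lm : lm (extm x).
Proof. apply: lm_ext_eq extm_Lm _; exact: Lm_lm psi1 psiM. Qed.

Lemma extm_gen j : extm x (gen F j) = x j.
Proof.
rewrite extm_Lm /gen LmU /psi mdomU big_seq_fset1 cmUU expr1 //.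
Qed.
End Extm.

Lemma monE (J : choiceType) (m : {cmonom J}) :
  << m >> = \prod_(j <- finsupp m) gen F j ^+ m j :> polyalg F J.
Proof.
have genX j n : gen F j ^+ n = << \big[mmul/mone]_(k < n) ucm j >> :> polyalg F J.
  elim: n => [|n IH]; first by rewrite expr0 big_ord0; exact: one_U.
  rewrite exprS IH big_ord_recl /gen UM. reflexivity.
under eq_bigr do rewrite genX.
rewrite -(big_morph (fun k : {cmonom J} => << k >> : polyalg F J) (fun a b => esym (@UM _ a b)) (esym (one_U _))).
congr << _ >>; apply/eqP/cmP => i.
have ev (T : Type) (r : seq T) (G : T -> {cmonom J}) :
    (\big[mmul/mone]_(t <- r) G t) i = (\sum_(t <- r) G t i)%N.
  by rewrite (big_morph (fun m : {cmonom J} => m i) (fun a b => cmM i a b) (cm1 i)).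
rewrite ev.
under eq_bigr do rewrite ev.
under eq_bigr do rewrite big_const_ord iter_addn_0 cmU.
have [iin|inin] := boolP (i \in finsupp m).
  rewrite (big_fsetD1 i iin) /= eqxx mul1n big_seq big1 ?addn0 //.
  move=> j; rewrite in_fsetD1 => /andP [ne _].
  case: eqP => [e|_]; last by rewrite mul0n.
  by subst j; rewrite eqxx in ne.
rewrite big_seq big1.
  by apply/eqP; rewrite cmE_eq0.
move=> j jin; case: eqP => [e|_]; last by rewrite mul0n.
by subst j; rewrite jin in inin.
Qed.
Lemma lm_ext (J : choiceType) (B : algType F) (f g : polyalg F J -> B) :
  lm f -> lm g -> (forall j, f (gen F j) = g (gen F j)) -> forall a, f a = g a.
Proof.
move=> fm gm e a.
have [fl _ _] := fm; have [gl _ _] := gm.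
rewrite (@lin_expand _ _ f fl) (@lin_expand _ _ g gl) /Lm; apply: eq_bigr => k _.
by rewrite monE (lm_prod fm) (lm_prod gm); under eq_bigr do rewrite (lmX fm) e -(lmX gm).
Qed.

Lemma lmL {B A : algType F} {f : B -> A} : lm f ->
  forall c a b, f (c *: a + b) = c *: f a + f b.
Proof. by case. Qed.
Lemma lm1 {B A : algType F} {f : B -> A} : lm f -> f 1 = 1.
Proof. by case. Qed.
Lemma lmM {B A : algType F} {f : B -> A} : lm f -> forall a b, f (a * b) = f a * f b.
Proof. by case. Qed.
Lemma lm0 {B A : algType F} {f : B -> A} : lm f -> f 0 = 0.
Proof.
move=> fm; have := lmL fm 1 0 0; rewrite !scale1r !addr0 => h.
by apply/(addrI (f 0)); rewrite addr0 -h.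
Qed.
Lemma lmD {B A : algType F} {f : B -> A} : lm f -> forall a b, f (a + b) = f a + f b.
Proof. by move=> fm a b; have := lmL fm 1 a b; rewrite !scale1r. Qed.
Lemma lmZ {B A : algType F} {f : B -> A} : lm f -> forall c a, f (c *: a) = c *: f a.
Proof. by move=> fm c a; have := lmL fm c a 0; rewrite addr0 (lm0 fm) addr0. Qed.
Lemma lmN {B A : algType F} {f : B -> A} : lm f -> forall a, f (- a) = - f a.
Proof. by move=> fm a; have := lmZ fm (-1) a; rewrite !scaleN1r. Qed.

End Gen.
Arguments lm {F B A}.
Arguments linf {F K A}.

Section Main.
Variables (F : fieldType) (I : choiceType) (deg : I -> nat).
Local Notation SV := (SymV F I).
Local Notation SV2 := (SymV2 F I).
Local Notation T := (@ThetaSymV F I deg).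
Local Notation tens_l := (@tens_l F I).
Local Notation tens_r := (@tens_r F I).
Local Notation tens := (@tens F I).
Local Notation tmap := (@tmap F I).
Local Notation counit := (@counit F I).

Lemma odd_monomP (m : {cmonom I}) :
  reflect (forall i, i \in finsupp m -> odd (deg i)) (odd_monom deg m).
Proof. exact: allP. Qed.

Lemma odd_monom1 : odd_monom deg (mone : {cmonom I}).
Proof. by apply/odd_monomP => i; rewrite mdom1 in_fset0. Qed.

Lemma odd_monomM (m1 m2 : {cmonom I}) :
  odd_monom deg (mmul m1 m2) = odd_monom deg m1 && odd_monom deg m2.
Proof.
apply/odd_monomP/andP => [h|[/odd_monomP h1 /odd_monomP h2] i].
  by split; apply/odd_monomP => i ii; apply: h; rewrite mdomD in_fsetU ii ?orbT.
by rewrite mdomD in_fsetU => /orP [/h1|/h2].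
Qed.

Lemma odd_monomU (i : I) : odd_monom deg (ucm i) = odd (deg i).
Proof.
apply/odd_monomP/idP => [h|h j]; first by apply: h; rewrite mdomU in_fset1 eqxx.
by rewrite mdomU in_fset1 => /eqP ->.
Qed.

Definition thphi (m : {cmonom I}) : SV :=
  if odd_monom deg m then 2%:R ^+ mdeg m *: << m >> else 0.

Lemma TE : T =1 Lm thphi.
Proof. move=> a; reflexivity. Qed.

Lemma thphi1 : thphi mone = 1.
Proof.
rewrite /thphi odd_monom1 mdeg1 expr0 scale1r; exact: (esym (one_U _)).
Qed.

Lemma thphiM k1 k2 : thphi (mmul k1 k2) = thphi k1 * thphi k2.
Proof.
rewrite /thphi odd_monomM mdegM.
case: (odd_monom deg k1); case: (odd_monom deg k2) => /=; rewrite ?mul0r ?mulr0 //.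
by rewrite -scalerAl -scalerAr scalerA -exprD UM.
Qed.

Lemma T_lm : lm T.
Proof. exact: (lm_ext_eq _ _ _ _ TE (Lm_lm _ _ _ thphi1 thphiM)). Qed.

Lemma T_gen i : T (gen F i) = (if odd (deg i) then 2%:R else 0) *: gen F i.
Proof.
rewrite TE /gen LmU /thphi odd_monomU mdegU expr1.
by case: (odd (deg i)); rewrite ?scale0r.
Qed.

Lemma TM (a b : SV) : T (a * b) = T a * T b.
Proof. exact: (lmM T_lm a b). Qed.

Lemma TU (m1 m2 : {cmonom I}) : T << mmul m1 m2 >> = T << m1 >> * T << m2 >>.
Proof. by rewrite -UM TM. Qed.

Lemma T1 : T 1 = 1. Proof. exact: lm1 T_lm. Qed.

Lemma coefT (a : SV) m :
  (T a)@_m = a@_m * (if odd_monom deg m then 2%:R ^+ mdeg m else 0).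
Proof.
rewrite TE /Lm (big_morph (mcoeff m) (@mcoeffD _ _ m) (mcoeff0 m)).
rewrite [a@_m](_ : _ = (\sum_(k <- msupp a) << a@_k *g k >>)@_m); last by rewrite -monalgE.
rewrite [in RHS](big_morph (mcoeff m) (@mcoeffD _ _ m) (mcoeff0 m)).
rewrite mulr_suml.
apply: eq_bigr => k _; rewrite mcoeffZ mcoeffU /thphi.
case: eqP => [<-|ne].
  rewrite mulr1n; case: ifP => _; first by rewrite mcoeffZ mcoeffU eqxx mulr1.
  by rewrite mcoeff0 mulr0.
rewrite mulr0n mul0r; case: ifP => _; last by rewrite mcoeff0 mulr0.
by rewrite mcoeffZ mcoeffU (introF eqP ne) !mulr0.
Qed.

Lemma msuppT (a : SV) m : m \in msupp (T a) -> (m \in msupp a) && odd_monom deg m.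
Proof.
rewrite -mcoeff_neq0 coefT; case: (boolP (m \in msupp a)) => ma.
  by case: ifP => //; rewrite mulr0 eqxx.
by rewrite (mcoeff_outdom ma) mul0r eqxx.
Qed.

Lemma counitT (a : SV) : counit (T a) = counit a.
Proof.
rewrite /counit.
have -> : @onecm I = mone by reflexivity.
by rewrite coefT odd_monom1 mdeg1 expr0 mulr1.
Qed.

Definition tlphi (m : {cmonom I}) : SV2 := << (m, mone) : mpair _ _ >>.
Definition trphi (m : {cmonom I}) : SV2 := << (mone, m) : mpair _ _ >>.

Lemma tlE : tens_l =1 Lm tlphi. Proof. move=> a; reflexivity. Qed.
Lemma trE : tens_r =1 Lm trphi. Proof. move=> a; reflexivity. Qed.

Lemma tl_lm : lm tens_l.
Proof.
apply: (lm_ext_eq _ _ _ _ tlE); apply: Lm_lm.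
  rewrite /tlphi one_U; reflexivity.
move=> k1 k2; rewrite /tlphi UM.
have -> : mmul ((k1, mone) : mpair {cmonom I} {cmonom I}) (k2, mone)
   = (mmul k1 k2, mmul mone mone) by reflexivity.
by rewrite mulm1.
Qed.

Lemma tr_lm : lm tens_r.
Proof.
apply: (lm_ext_eq _ _ _ _ trE); apply: Lm_lm.
  rewrite /trphi one_U; reflexivity.
move=> k1 k2; rewrite /trphi UM.
have -> : mmul ((mone, k1) : mpair {cmonom I} {cmonom I}) (mone, k2)
   = (mmul mone mone, mmul k1 k2) by reflexivity.
by rewrite mulm1.
Qed.

Lemma tlM (a b : SV) : tens_l (a * b) = tens_l a * tens_l b.
Proof. exact: (lmM tl_lm a b). Qed.
Lemma trM (a b : SV) : tens_r (a * b) = tens_r a * tens_r b.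
Proof. exact: (lmM tr_lm a b). Qed.

Lemma tensZl c (a b : SV) : tens (c *: a) b = c *: tens a b.
Proof. by rewrite /tens (lmZ tl_lm) -scalerAl. Qed.
Lemma tensZr c (a b : SV) : tens a (c *: b) = c *: tens a b.
Proof. by rewrite /tens (lmZ tr_lm) -scalerAr. Qed.
Lemma tens11 : tens 1 1 = 1 :> SV2.
Proof. by rewrite /tens (lm1 tl_lm) (lm1 tr_lm) mulr1. Qed.

Lemma tens_mul (a a' b b' : SV) : tens a b * tens a' b' = tens (a * a') (b * b').
Proof. by rewrite /tens mulrACA tlM trM. Qed.

Definition tmphi (k : mpair {cmonom I} {cmonom I}) : SV2 :=
  tens (T << k.1 >>) (T << k.2 >>).

Lemma tmE : tmap T T =1 Lm tmphi. Proof. move=> a; reflexivity. Qed.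

Lemma tmphiM' (a1 a2 b1 b2 : {cmonom I}) :
  tens (T << mmul a1 b1 >>) (T << mmul a2 b2 >>)
  = tens (T << a1 >>) (T << a2 >>) * tens (T << b1 >>) (T << b2 >>).
Proof. rewrite tens_mul; exact: (f_equal2 tens (TU a1 b1) (TU a2 b2)). Qed.

Lemma tm_lm : lm (tmap T T).
Proof.
apply: (lm_ext_eq _ _ _ _ tmE); apply: Lm_lm.
  rewrite /tmphi /= -one_U T1; exact: tens11.
move=> [a1 a2] [b1 b2]; exact: (tmphiM' a1 a2 b1 b2).
Qed.

Lemma T1' : T << (mone : {cmonom I}) >> = 1.
Proof. rewrite -one_U; exact: T1. Qed.

Lemma tm_tlU (m : {cmonom I}) : tmap T T (tens_l << m >>) = tens_l (T << m >>).
Proof.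
have e1 : tens_l << m >> = << ((m, mone) : mpair {cmonom I} {cmonom I}) >>.
  exact: (LmU tlphi m).
have e2 : tmap T T << ((m, mone) : mpair {cmonom I} {cmonom I}) >>
          = tens (T << m >>) (T << (mone : {cmonom I}) >>).
  exact: (LmU tmphi _).
rewrite [LHS](_ : _ = tmap T T << ((m, mone) : mpair {cmonom I} {cmonom I}) >>);
  last exact: (f_equal (tmap T T) e1).
rewrite e2 /tens.
transitivity (tens_l (T << m >>) * 1); last exact: mulr1.
congr (_ * _); rewrite T1'; exact: (lm1 tr_lm).
Qed.

Lemma tm_trU (m : {cmonom I}) : tmap T T (tens_r << m >>) = tens_r (T << m >>).
Proof.
have e1 : tens_r << m >> = << ((mone, m) : mpair {cmonom I} {cmonom I}) >>.
  exact: (LmU trphi m).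
have e2 : tmap T T << ((mone, m) : mpair {cmonom I} {cmonom I}) >>
          = tens (T << (mone : {cmonom I}) >>) (T << m >>).
  exact: (LmU tmphi _).
rewrite [LHS](_ : _ = tmap T T << ((mone, m) : mpair {cmonom I} {cmonom I}) >>);
  last exact: (f_equal (tmap T T) e1).
rewrite e2 /tens.
transitivity (1 * tens_r (T << m >>)); last exact: mul1r.
congr (_ * _); rewrite T1'; exact: (lm1 tl_lm).
Qed.

Lemma tm_tl (a : SV) : tmap T T (tens_l a) = tens_l (T a).
Proof.
apply: (lm_ext _ _ (fun a => tmap T T (tens_l a)) (fun a => tens_l (T a))
   (lm_comp _ _ _ _ _ tl_lm tm_lm) (lm_comp _ _ _ _ _ T_lm tl_lm)) => i.
exact: (tm_tlU (ucm i)).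
Qed.

Lemma tm_tr (a : SV) : tmap T T (tens_r a) = tens_r (T a).
Proof.
apply: (lm_ext _ _ (fun a => tmap T T (tens_r a)) (fun a => tens_r (T a))
   (lm_comp _ _ _ _ _ tr_lm tm_lm) (lm_comp _ _ _ _ _ T_lm tr_lm)) => i.
exact: (tm_trU (ucm i)).
Qed.

Lemma tmM (x y : SV2) : tmap T T (x * y) = tmap T T x * tmap T T y.
Proof. exact: (lmM tm_lm x y). Qed.

Lemma tm_tens (a b : SV) : tmap T T (tens a b) = tens (T a) (T b).
Proof.
have h := tmM (tens_l a) (tens_r b).
transitivity (tmap T T (tens_l a) * tmap T T (tens_r b)); first exact: h.
rewrite [X in X * _]tm_tl [X in _ * X]tm_tr; reflexivity.
Qed.

Local Notation coprod := (@coprod F I).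
Local Notation antipode := (@antipode F I).
Local Notation Phi := (@PhiSymV F I deg).

Lemma cop_lm : lm coprod. Proof. exact: (extm_lm _ _ _). Qed.
Lemma cop_gen i : coprod (gen F i) = tens (gen F i) 1 + tens 1 (gen F i).
Proof. exact: (extm_gen _ _ _ i). Qed.

Lemma copZ c (x : SV) : coprod (c *: x) = c *: coprod x.
Proof. exact: (lmZ cop_lm c x). Qed.
Lemma tmD (x y : SV2) : tmap T T (x + y) = tmap T T x + tmap T T y.
Proof. exact: (lmD tm_lm x y). Qed.

Lemma tm_prim (x : SV) : tmap T T (tens x 1 + tens 1 x) = tens (T x) 1 + tens 1 (T x).
Proof.
rewrite [LHS]tmD [X in X + _ = _](tm_tens x 1) [X in _ + X = _](tm_tens 1 x).
by rewrite T1.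
Qed.

Lemma prim_scale c (x : SV) :
  tens (c *: x) 1 + tens 1 (c *: x) = c *: (tens x 1 + tens 1 x).
Proof. by rewrite tensZl tensZr scalerDr. Qed.

Lemma coprodT a : coprod (T a) = tmap T T (coprod a).
Proof.
apply: (lm_ext _ _ (fun a => coprod (T a)) (fun a => tmap T T (coprod a))
  (lm_comp _ _ _ _ _ T_lm cop_lm) (lm_comp _ _ _ _ _ cop_lm tm_lm)) => i /=.
transitivity (coprod ((if odd (deg i) then 2%:R else 0) *: gen F i)).
  exact: (f_equal coprod (T_gen i)).
rewrite [in LHS]copZ [in LHS](cop_gen i) [in RHS](cop_gen i) [in RHS]tm_prim [in RHS](T_gen i).
rewrite [in RHS]prim_scale; reflexivity.
Qed.

Lemma ant_lm : lm antipode. Proof. exact: (extm_lm _ _ _). Qed.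
Lemma ant_gen i : antipode (gen F i) = - gen F i.
Proof. exact: (extm_gen _ _ _ i). Qed.

Lemma antZ c (x : SV) : antipode (c *: x) = c *: antipode x.
Proof. exact: (lmZ ant_lm c x). Qed.
Lemma TN (x : SV) : T (- x) = - T x.
Proof. exact: (lmN T_lm x). Qed.

Lemma antipodeT a : antipode (T a) = T (antipode a).
Proof.
apply: (lm_ext _ _ (fun a => antipode (T a)) (fun a => T (antipode a))
  (lm_comp _ _ _ _ _ T_lm ant_lm) (lm_comp _ _ _ _ _ ant_lm T_lm)) => i /=.
transitivity (antipode ((if odd (deg i) then 2%:R else 0) *: gen F i)).
  exact: (f_equal antipode (T_gen i)).
rewrite [in LHS]antZ [in LHS](ant_gen i) [in RHS](ant_gen i) [in RHS]TN [in RHS](T_gen i).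
rewrite scalerN; reflexivity.
Qed.

Lemma phi_lm : lm Phi. Proof. exact: (extm_lm _ _ _). Qed.
Lemma phi_gen i : Phi (gen F i) = pn F (deg i).
Proof. exact: (extm_gen _ _ _ i). Qed.
Lemma th_lm : lm (@ThetaSym F). Proof. exact: (extm_lm _ _ _). Qed.
Lemma th_gen (k : nat) :
  ThetaSym (gen F k) = if odd k.+1 then 2%:R *: pn F k.+1 else 0.
Proof. exact: (extm_gen _ _ _ k). Qed.

Lemma phiZ c (x : SV) : Phi (c *: x) = c *: Phi x.
Proof. exact: (lmZ phi_lm c x). Qed.

Lemma PhiT (deg_pos : forall i, (0 < deg i)%N) a : Phi (T a) = ThetaSym (Phi a).
Proof.
apply: (lm_ext _ _ (fun a => Phi (T a)) (fun a => ThetaSym (Phi a))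
  (lm_comp _ _ _ _ _ T_lm phi_lm) (lm_comp _ _ _ _ _ phi_lm th_lm)) => i /=.
transitivity (Phi ((if odd (deg i) then 2%:R else 0) *: gen F i)).
  exact: (f_equal Phi (T_gen i)).
have e : pn F (deg i) = gen F (deg i).-1 by reflexivity.
rewrite [in LHS]phiZ [in LHS](phi_gen i) [in RHS](phi_gen i) [in RHS]e [in RHS](th_gen (deg i).-1).
rewrite (prednK (deg_pos i)).
by case: (odd (deg i)); [reflexivity | rewrite scale0r].
Qed.

Lemma gradedT : graded deg T.
Proof. by move=> n a h m /msuppT /andP [ma _]; apply: h. Qed.

Lemma SymOT a : in_SymO deg (T a).
Proof. by move=> m /msuppT /andP [_ ->]. Qed.

Lemma hopfT : hopf_morph T.
Proof.
split; first exact: T_lm.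
split; [exact: coprodT | exact: counitT | exact: antipodeT].
Qed.

End Main.

Local Close Scope ring_scope.

Theorem mainTheorem13 (F : fieldType) (I : choiceType) (deg : I -> nat)
  (charF0 : [pchar F]%R =i pred0)
  (deg_pos : forall i, (0 < deg i)%N)
  (deg_fin : forall d : nat, exists s : seq I, forall i, deg i = d -> i \in s) :
  [/\ @hopf_morph F I (@ThetaSymV F I deg),
      @graded F I deg (@ThetaSymV F I deg),
      (forall a, @in_SymO F I deg (@ThetaSymV F I deg a)),
      (forall a, @PhiSymV F I deg (@ThetaSymV F I deg a)
                 = @ThetaSym F (@PhiSymV F I deg a)) &
      @is_theta_map F I deg (@ThetaSymV F I deg)].
Proof.
split.
- exact: hopfT.
- exact: gradedT.
- exact: SymOT.
- exact: PhiT.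
- split; [exact: hopfT | exact: gradedT | exact: PhiT].
Qed.
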